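(* For every integer $n \geq 4$, $$\gamma_{b,2}(C_4 \square C_n) = 4\left\lfloor \frac{n}{6} \right\rfloor + \begin{cases} 0 & \text{if } n \equiv 0 \pmod 6,\\ 2 & \text{if } n \equiv 1 \text{ or } 2 \pmod 6,\\ 3 & \text{if } n \equiv 3 \text{ or } 4 \pmod 6,\\ 4 & \text{if } n \equiv 5 \pmod 6.\end{cases}$$
   Context: For a graph $G$, a $2$-limited broadcast is a function $f: V(G) \to \{0,1,2\}$. A vertex $u$ hears the broadcast from $v$ if $f(v) > 0$ and $d(u,v) \leq f(v)$, where $d$ is the distance in $G$. The broadcast $f$ is dominating if every vertex of $G$ hears the broadcast from some vertex. The cost of $f$ is $\sum_{v \in V(G)} f(v)$. The $2$-limited broadcast domination number $\gamma_{b,2}(G)$ is the minimum cost of a $2$-limited dominating broadcast on $G$. $C_n$ denotes the cycle on $n$ vertices and $\square$ the Cartesian product of graphs. *)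

(* Defs.v *)
From mathcomp Require Import all_boot.
Set Implicit Arguments. Unset Strict Implicit. Unset Printing Implicit Defensive.

(* d(u,v) <= k in the graph with adjacency e: there is a walk of length <= k. *)
Definition within (T : finType) (e : rel T) (k : nat) (u v : T) : Prop :=
  exists p : seq T, [/\ path e u p, last u p = v & size p <= k].

(* Cycle C_n on vertex set 'I_n (intended for n >= 3). *)
Definition cycle_adj (n : nat) : rel 'I_n :=
  fun i j => (j == (i.+1 %% n) :> nat) || (i == (j.+1 %% n) :> nat).
Arguments cycle_adj : clear implicits.

Definition cart_adj (A B : finType) (eA : rel A) (eB : rel B) : rel (A * B) :=
  fun x y => ((x.1 == y.1) && eB x.2 y.2) || ((x.2 == y.2) && eA x.1 y.1).

Definition broadcast2 (T : finType) := {ffun T -> 'I_3}.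

Definition dominating (T : finType) (e : rel T) (f : broadcast2 T) : Prop :=
  forall u : T, exists v : T, 0 < f v /\ within e (f v) u v.

Definition cost (T : finType) (f : broadcast2 T) : nat := \sum_(v : T) (f v : nat).

Definition is_gamma_b2 (T : finType) (e : rel T) (m : nat) : Prop :=
  (exists f : broadcast2 T, dominating e f /\ cost f = m) /\
  (forall f : broadcast2 T, dominating e f -> m <= cost f).

Definition C4xCn_adj (n : nat) : rel ('I_4 * 'I_n) :=
  cart_adj (cycle_adj 4) (cycle_adj n).

Definition gamma_formula (n : nat) : nat :=
  4 * (n %/ 6) +
  match n %% 6 with
  | 0 => 0 | 1 => 2 | 2 => 2 | 3 => 3 | 4 => 3 | _ => 4
  end.
Arguments C4xCn_adj : clear implicits.

(* Main.v *)
Require Import Defs.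
From mathcomp Require Import all_boot zify.
Set Implicit Arguments. Unset Strict Implicit. Unset Printing Implicit Defensive.

Definition ad (i j : nat) := (i - j) + (j - i).
Definition cd (m i j : nat) := minn (ad i j) (m - ad i j).
Definition dst n (u v : nat * nat) := cd 4 u.1 v.1 + cd n u.2 v.2.
Definition vld n (u : nat * nat) := (u.1 < 4) && (u.2 < n).
Definition cov n (G : nat -> nat -> nat) (v u : nat * nat) :=
  (0 < G v.1 v.2) && (dst n u v <= G v.1 v.2).

Record Hyp n (G : nat -> nat -> nat) : Prop := {
  hbd : forall i j, G i j <= 2;
  hdom : forall u, vld n u -> exists v, vld n v /\ cov n G v u;
  hones : forall v w, vld n v -> vld n w -> G v.1 v.2 = 1 -> G w.1 w.2 = 1 -> v = w;
  hdbl : forall u u' v1 v2 w1 w2, vld n u -> vld n u' -> vld n v1 -> vld n v2 ->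
     vld n w1 -> vld n w2 -> v1 <> v2 -> cov n G v1 u -> cov n G v2 u ->
     w1 <> w2 -> cov n G w1 u' -> cov n G w2 u' -> u = u' }.

Lemma modtwo x n : x < n + n -> x %% n = if x < n then x else x - n.
Proof.
move=> h; case: ifP => h'; first by rewrite modn_small.
have e : x = (x - n) + n by lia.
rewrite {1}e modnDr modn_small //; lia.
Qed.

Lemma iso m a i j : a < m -> i < m -> j < m -> cd m ((a + i) %% m) ((a + j) %% m) = cd m i j.
Proof. move=> ha hi hj. rewrite !modtwo; try lia. rewrite /cd /ad. case: ifP; case: ifP; lia. Qed.

Lemma tr_inj m a i j : a < m -> i < m -> j < m -> (a + i) %% m = (a + j) %% m -> i = j.
Proof. move=> ha hi hj. rewrite !modtwo; try lia. case: ifP; case: ifP; lia. Qed.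

Lemma tr_lt m a i : 0 < m -> (a + i) %% m < m.
Proof. move=> h; exact: ltn_pmod. Qed.

Lemma tr_surj m a v : a < m -> v < m -> exists i, i < m /\ (a + i) %% m = v.
Proof.
move=> ha hv; exists (if a <= v then v - a else v + m - a); split; first by case: ifP; lia.
rewrite modtwo; last by case: ifP; lia.
case: ifP; case: ifP; lia.
Qed.

Lemma dbl2 n G (HG : Hyp n G) u u' v w : vld n u -> vld n u' -> vld n v -> vld n w ->
  v <> w -> cov n G v u -> cov n G w u -> cov n G v u' -> cov n G w u' -> u <> u' -> False.
Proof. move=> h1 h2 h3 h4 h5 h6 h7 h8 h9 h10; apply: h10; exact: (hdbl HG h1 h2 h3 h4 h3 h4 h5 h6 h7 h5 h8 h9). Qed.

Lemma ones2 n G (HG : Hyp n G) v w : vld n v -> vld n w ->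
  G v.1 v.2 = 1 -> G w.1 w.2 = 1 -> v <> w -> False.
Proof. move=> h1 h2 h3 h4 h5; apply: h5; exact: (hones HG). Qed.

Ltac neqp := let H := fresh in move=> H; case: H; intros; lia.
Ltac side := rewrite /vld /cov /dst /cd /ad /=; first [neqp | lia].

Lemma near0 n G : 7 <= n -> Hyp n G -> G 0 0 = 2 ->
  forall r j, r < 4 -> j < 3 -> (r, j) <> (0, 0) -> G r j = 2 -> False.
Proof.
move=> n7 HG H00 r j hr hj hne Hrj.
have Hr : r = 0 \/ r = 1 \/ r = 2 \/ r = 3 by lia.
have Hj : j = 0 \/ j = 1 \/ j = 2 by lia.
case: Hr => [?|[?|[?|?]]]; case: Hj => [?|[?|?]]; subst r j.
- by [].
- by apply: (dbl2 HG (u:=(0, 0)) (u':=(0, 1)) (v:=(0, 0)) (w:=(0, 1))); side.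
- by apply: (dbl2 HG (u:=(0, 0)) (u':=(0, 1)) (v:=(0, 0)) (w:=(0, 2))); side.
- by apply: (dbl2 HG (u:=(0, 0)) (u':=(1, 0)) (v:=(0, 0)) (w:=(1, 0))); side.
- by apply: (dbl2 HG (u:=(0, 0)) (u':=(0, 1)) (v:=(0, 0)) (w:=(1, 1))); side.
- by apply: (dbl2 HG (u:=(0, 1)) (u':=(0, 2)) (v:=(0, 0)) (w:=(1, 2))); side.
- by apply: (dbl2 HG (u:=(0, 0)) (u':=(1, 0)) (v:=(0, 0)) (w:=(2, 0))); side.
- by apply: (dbl2 HG (u:=(0, 1)) (u':=(1, 0)) (v:=(0, 0)) (w:=(2, 1))); side.
- by apply: (dbl2 HG (u:=(0, 2)) (u':=(1, 1)) (v:=(0, 0)) (w:=(2, 2))); side.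
- by apply: (dbl2 HG (u:=(0, 0)) (u':=(1, 0)) (v:=(0, 0)) (w:=(3, 0))); side.
- by apply: (dbl2 HG (u:=(0, 0)) (u':=(0, 1)) (v:=(0, 0)) (w:=(3, 1))); side.
- by apply: (dbl2 HG (u:=(0, 1)) (u':=(0, 2)) (v:=(0, 0)) (w:=(3, 2))); side.
Qed.

Lemma step n G : 7 <= n -> Hyp n G -> G 0 0 = 2 ->
  (G 2 3 = 2 /\ forall r j, r < 4 -> 0 < j < 3 -> G r j <> 2) \/
  (G 0 4 = 2 /\ forall r j, r < 4 -> 0 < j < 4 -> G r j <> 2).
Proof.
move=> n7 HG H00.
have near := near0 n7 HG H00.
have AB : G 2 3 = 2 \/ G 2 2 = 1.
{ have [[p q] [Hv Hc]] := hdom HG (u:=(2, 1)) ltac:(side).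
move: Hv Hc; rewrite /vld /cov /dst /cd /ad /= => /andP [Hp4 Hqn] /andP [Hc1 Hc2].
have Hg : G p q = 1 \/ G p q = 2 by have := hbd HG p q; lia.
have Hq : q = n - 1 \/ q = 0 \/ q = 1 \/ q = 2 \/ q = 3 by lia.
have Hp : p = 0 \/ p = 1 \/ p = 2 \/ p = 3 by lia.
case: Hq => [?|[?|[?|[?|?]]]]; case: Hp => [?|[?|[?|?]]]; subst p q; case: Hg => Hg.
- exfalso; lia.
- exfalso; lia.
- exfalso; lia.
- exfalso; lia.
- exfalso; lia.
- exfalso; by apply: (dbl2 HG (u:=(0, (n - 1))) (u':=(1, (n - 1))) (v:=(0, 0)) (w:=(2, (n - 1)))); side.
- exfalso; lia.
- exfalso; lia.
- exfalso; lia.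
- exfalso; lia.
- exfalso; lia.
- exfalso; by apply: (dbl2 HG (u:=(0, 0)) (u':=(1, 0)) (v:=(0, 0)) (w:=(1, 0))); side.
- exfalso; by apply: (dbl2 HG (u:=(1, 0)) (u':=(2, 0)) (v:=(0, 0)) (w:=(2, 0))); side.
- exfalso; by apply: (dbl2 HG (u:=(0, 0)) (u':=(1, 0)) (v:=(0, 0)) (w:=(2, 0))); side.
- exfalso; lia.
- exfalso; by apply: (dbl2 HG (u:=(0, 0)) (u':=(1, 0)) (v:=(0, 0)) (w:=(3, 0))); side.
- exfalso; lia.
- exfalso; by apply: (dbl2 HG (u:=(0, 0)) (u':=(0, 1)) (v:=(0, 0)) (w:=(0, 1))); side.
- exfalso; by apply: (dbl2 HG (u:=(0, 1)) (u':=(1, 0)) (v:=(0, 0)) (w:=(1, 1))); side.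
- exfalso; by apply: (dbl2 HG (u:=(0, 0)) (u':=(0, 1)) (v:=(0, 0)) (w:=(1, 1))); side.
- exfalso; by apply: (dbl2 HG (u:=(1, 1)) (u':=(2, 0)) (v:=(0, 0)) (w:=(2, 1))); side.
- exfalso; by apply: (dbl2 HG (u:=(0, 1)) (u':=(1, 0)) (v:=(0, 0)) (w:=(2, 1))); side.
- exfalso; by apply: (dbl2 HG (u:=(0, 1)) (u':=(3, 0)) (v:=(0, 0)) (w:=(3, 1))); side.
- exfalso; by apply: (dbl2 HG (u:=(0, 0)) (u':=(0, 1)) (v:=(0, 0)) (w:=(3, 1))); side.
- exfalso; lia.
- exfalso; lia.
- exfalso; lia.
- exfalso; by apply: (dbl2 HG (u:=(0, 1)) (u':=(0, 2)) (v:=(0, 0)) (w:=(1, 2))); side.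
- by right.
- exfalso; by apply: (dbl2 HG (u:=(0, 2)) (u':=(1, 1)) (v:=(0, 0)) (w:=(2, 2))); side.
- exfalso; lia.
- exfalso; by apply: (dbl2 HG (u:=(0, 1)) (u':=(0, 2)) (v:=(0, 0)) (w:=(3, 2))); side.
- exfalso; lia.
- exfalso; lia.
- exfalso; lia.
- exfalso; lia.
- exfalso; lia.
- by left.
- exfalso; lia.
- exfalso; lia. }
case: AB => [HA|HB].
  left; split => // r j hr hj Hrj; exact: (near r j hr ltac:(lia) ltac:(case=> ? ?; lia) Hrj).
right.
have H1 : G 0 4 = 2 \/ G 1 5 = 2.
{ have [[p q] [Hv Hc]] := hdom HG (u:=(1, 3)) ltac:(side).
move: Hv Hc; rewrite /vld /cov /dst /cd /ad /= => /andP [Hp4 Hqn] /andP [Hc1 Hc2].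
have Hg : G p q = 1 \/ G p q = 2 by have := hbd HG p q; lia.
have Hq : q = 1 \/ q = 2 \/ q = 3 \/ q = 4 \/ q = 5 by lia.
have Hp : p = 0 \/ p = 1 \/ p = 2 \/ p = 3 by lia.
case: Hq => [?|[?|[?|[?|?]]]]; case: Hp => [?|[?|[?|?]]]; subst p q; case: Hg => Hg.
- exfalso; lia.
- exfalso; lia.
- exfalso; lia.
- exfalso; by apply: (dbl2 HG (u:=(0, 0)) (u':=(0, 1)) (v:=(0, 0)) (w:=(1, 1))); side.
- exfalso; lia.
- exfalso; lia.
- exfalso; lia.
- exfalso; lia.
- exfalso; lia.
- exfalso; by apply: (dbl2 HG (u:=(0, 0)) (u':=(0, 1)) (v:=(0, 0)) (w:=(0, 2))); side.
- exfalso; by apply: (ones2 HG (v:=(1, 2)) (w:=(2, 2))); side.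
- exfalso; by apply: (dbl2 HG (u:=(0, 1)) (u':=(0, 2)) (v:=(0, 0)) (w:=(1, 2))); side.
- exfalso; lia.
- exfalso; lia.
- exfalso; lia.
- exfalso; lia.
- exfalso; by apply: (ones2 HG (v:=(0, 3)) (w:=(2, 2))); side.
- exfalso; by apply: (dbl2 HG (u:=(0, 1)) (u':=(0, 2)) (v:=(0, 0)) (w:=(0, 3))); side.
- exfalso; by apply: (ones2 HG (v:=(1, 3)) (w:=(2, 2))); side.
- exfalso; by apply: (dbl2 HG (u:=(0, 2)) (u':=(1, 1)) (v:=(0, 0)) (w:=(1, 3))); side.
- exfalso; by apply: (ones2 HG (v:=(2, 3)) (w:=(2, 2))); side.
- exfalso; by apply: (dbl2 HG (u:=(1, 2)) (u':=(2, 2)) (v:=(2, 2)) (w:=(2, 3))); side.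
- exfalso; lia.
- exfalso; by apply: (dbl2 HG (u:=(0, 2)) (u':=(3, 1)) (v:=(0, 0)) (w:=(3, 3))); side.
- exfalso; lia.
- by left.
- exfalso; by apply: (ones2 HG (v:=(1, 4)) (w:=(2, 2))); side.
- exfalso; by apply: (dbl2 HG (u:=(1, 2)) (u':=(2, 3)) (v:=(2, 2)) (w:=(1, 4))); side.
- exfalso; lia.
- exfalso; by apply: (dbl2 HG (u:=(2, 2)) (u':=(2, 3)) (v:=(2, 2)) (w:=(2, 4))); side.
- exfalso; lia.
- exfalso; lia.
- exfalso; lia.
- exfalso; lia.
- exfalso; lia.
- by right.
- exfalso; lia.
- exfalso; lia.
- exfalso; lia.
- exfalso; lia. }
have H3 : G 0 4 = 2 \/ G 3 5 = 2.
{ have [[p q] [Hv Hc]] := hdom HG (u:=(3, 3)) ltac:(side).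
move: Hv Hc; rewrite /vld /cov /dst /cd /ad /= => /andP [Hp4 Hqn] /andP [Hc1 Hc2].
have Hg : G p q = 1 \/ G p q = 2 by have := hbd HG p q; lia.
have Hq : q = 1 \/ q = 2 \/ q = 3 \/ q = 4 \/ q = 5 by lia.
have Hp : p = 0 \/ p = 1 \/ p = 2 \/ p = 3 by lia.
case: Hq => [?|[?|[?|[?|?]]]]; case: Hp => [?|[?|[?|?]]]; subst p q; case: Hg => Hg.
- exfalso; lia.
- exfalso; lia.
- exfalso; lia.
- exfalso; lia.
- exfalso; lia.
- exfalso; lia.
- exfalso; lia.
- exfalso; by apply: (dbl2 HG (u:=(0, 0)) (u':=(0, 1)) (v:=(0, 0)) (w:=(3, 1))); side.
- exfalso; lia.
- exfalso; by apply: (dbl2 HG (u:=(0, 0)) (u':=(0, 1)) (v:=(0, 0)) (w:=(0, 2))); side.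
- exfalso; lia.
- exfalso; lia.
- exfalso; lia.
- exfalso; lia.
- exfalso; by apply: (ones2 HG (v:=(3, 2)) (w:=(2, 2))); side.
- exfalso; by apply: (dbl2 HG (u:=(0, 1)) (u':=(0, 2)) (v:=(0, 0)) (w:=(3, 2))); side.
- exfalso; by apply: (ones2 HG (v:=(0, 3)) (w:=(2, 2))); side.
- exfalso; by apply: (dbl2 HG (u:=(0, 1)) (u':=(0, 2)) (v:=(0, 0)) (w:=(0, 3))); side.
- exfalso; lia.
- exfalso; by apply: (dbl2 HG (u:=(0, 2)) (u':=(1, 1)) (v:=(0, 0)) (w:=(1, 3))); side.
- exfalso; by apply: (ones2 HG (v:=(2, 3)) (w:=(2, 2))); side.
- exfalso; by apply: (dbl2 HG (u:=(1, 2)) (u':=(2, 2)) (v:=(2, 2)) (w:=(2, 3))); side.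
- exfalso; by apply: (ones2 HG (v:=(3, 3)) (w:=(2, 2))); side.
- exfalso; by apply: (dbl2 HG (u:=(0, 2)) (u':=(3, 1)) (v:=(0, 0)) (w:=(3, 3))); side.
- exfalso; lia.
- by left.
- exfalso; lia.
- exfalso; lia.
- exfalso; lia.
- exfalso; by apply: (dbl2 HG (u:=(2, 2)) (u':=(2, 3)) (v:=(2, 2)) (w:=(2, 4))); side.
- exfalso; by apply: (ones2 HG (v:=(3, 4)) (w:=(2, 2))); side.
- exfalso; by apply: (dbl2 HG (u:=(2, 3)) (u':=(3, 2)) (v:=(2, 2)) (w:=(3, 4))); side.
- exfalso; lia.
- exfalso; lia.
- exfalso; lia.
- exfalso; lia.
- exfalso; lia.
- exfalso; lia.
- exfalso; lia.
- by right. }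
have H04 : G 0 4 = 2.
{ case: H1 => // H1; case: H3 => // H3; exfalso.
  by apply: (dbl2 HG (u:=(0, 5)) (u':=(1, 5)) (v:=(1, 5)) (w:=(3, 5))); side. }
split => // r j hr hj Hrj.
have : j = 3 \/ j < 3 by lia.
case=> [?|hj3]; last by exact: (near r j hr ltac:(lia) ltac:(case=> ? ?; lia) Hrj).
subst j.
have Hr : r = 0 \/ r = 1 \/ r = 2 \/ r = 3 by lia.
case: Hr => [?|[?|[?|?]]]; subst r.
- by apply: (dbl2 HG (u:=(0, 1)) (u':=(0, 2)) (v:=(0, 0)) (w:=(0, 3))); side.
- by apply: (dbl2 HG (u:=(0, 2)) (u':=(1, 1)) (v:=(0, 0)) (w:=(1, 3))); side.
- by apply: (dbl2 HG (u:=(1, 2)) (u':=(2, 2)) (v:=(2, 2)) (w:=(2, 3))); side.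
- by apply: (dbl2 HG (u:=(0, 2)) (u':=(3, 1)) (v:=(0, 0)) (w:=(3, 3))); side.
Qed.

Definition shG n (G : nat -> nat -> nat) a b := fun i j => G ((a + i) %% 4) ((b + j) %% n).

Lemma shift_hyp n G a b : 0 < n -> a < 4 -> b < n -> Hyp n G -> Hyp n (shG n G a b).
Proof.
move=> n0 ha hb HG.
pose tr (u : nat * nat) := ((a + u.1) %% 4, (b + u.2) %% n).
have vtr : forall u, vld n (tr u).
  by move=> u; rewrite /vld /tr /=; apply/andP; split; apply: ltn_pmod.
have ctr : forall u v, vld n u -> vld n v -> cov n (shG n G a b) v u = cov n G (tr v) (tr u).
  move=> [u1 u2] [v1 v2]; rewrite /vld /= => /andP [h1 h2] /andP [h3 h4].
  by rewrite /cov /dst /shG /tr /= !iso.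
have itr : forall u v, vld n u -> vld n v -> tr u = tr v -> u = v.
  move=> [u1 u2] [v1 v2]; rewrite /vld /tr /= => /andP [h1 h2] /andP [h3 h4] [e1 e2].
  by rewrite (tr_inj ha h1 h3 e1) (tr_inj hb h2 h4 e2).
have str : forall v, vld n v -> exists u, vld n u /\ tr u = v.
  move=> [v1 v2]; rewrite /vld /= => /andP [h1 h2].
  have [i [hi ei]] := tr_surj ha h1; have [j [hj ej]] := tr_surj hb h2.
  by exists (i, j); rewrite /vld /tr /= hi hj ei ej.
split.
- by move=> i j; rewrite /shG; exact: (hbd HG).
- move=> u hu; have [v' [hv' cv']] := hdom HG (vtr u).
  have [w [hw ew]] := str v' hv'; exists w; split => //.
  by rewrite ctr // ew.
- move=> v w hv hw e1 e2; apply: (itr _ _) => //.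
  exact: (hones HG (vtr v) (vtr w) e1 e2).
- move=> u u' v1 v2 w1 w2 hu hu' hv1 hv2 hw1 hw2 ne1 c1 c2 ne2 c3 c4.
  apply: (itr _ _) => //.
  apply: (hdbl HG (v1:=tr v1) (v2:=tr v2) (w1:=tr w1) (w2:=tr w2)) => //.
  + by move=> e; apply: ne1; apply: (itr _ _).
  + by rewrite -ctr.
  + by rewrite -ctr.
  + by move=> e; apply: ne2; apply: (itr _ _).
  + by rewrite -ctr.
  + by rewrite -ctr.
Qed.

Lemma colu n G : 7 <= n -> Hyp n G -> forall a b r, a < 4 -> b < n -> r < 4 ->
  G a b = 2 -> G r b = 2 -> r = a.
Proof.
move=> n7 HG a b r ha hb hr Ha Hr.
have n0 : 0 < n by lia.
have HG' := shift_hyp n0 ha hb HG.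
have H00 : shG n G a b 0 0 = 2 by rewrite /shG !addn0 !modn_small.
have [i [hi ei]] := tr_surj ha hr.
have : i = 0.
  case: (posnP i) => // ipos; exfalso.
  apply: (near0 n7 HG' H00 (r:=i) (j:=0)) => //.
  - by neqp.
  - by rewrite /shG ei addn0 modn_small.
by move=> e; move: ei; rewrite e addn0 modn_small.
Qed.

Lemma chain n G : 7 <= n -> n %% 2 = 1 -> Hyp n G -> G 0 0 = 2 -> False.
Proof.
move=> n7 nodd HG H00.
have n0 : 0 < n by lia.
have Q : forall m r, r < 4 -> G r (m %% n) = 2 -> r = (2 * m) %% 4.
  elim/ltn_ind => m IH r hr Hr.
  case: (posnP m) => [m0|mpos].
    subst m; move: Hr; rewrite mod0n => Hr; rewrite muln0 mod0n.
    exact: (colu n7 HG (a:=0) (b:=0) (r:=r) isT n0 hr H00 Hr).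
  pose P k := (k < m) && [exists r : 'I_4, G r (k %% n) == 2].
  have P0 : P 0 by rewrite /P mpos /=; apply/existsP; exists ord0; rewrite mod0n H00.
  have ub : forall k, P k -> k <= m by move=> k /andP [h _]; exact: ltnW.
  case: (ex_maxnP (ex_intro _ 0 P0) ub) => m' /andP [ltm /existsP [r' /eqP Hr']] maxm.
  have e' := IH m' ltm r' (ltn_ord r') Hr'.
  have hm' : m' %% n < n by apply: ltn_pmod.
  have HG'' := shift_hyp n0 (ltn_ord r') hm' HG.
  have H00'' : shG n G r' (m' %% n) 0 0 = 2.
    by rewrite /shG !addn0 modn_mod modn_small.
  have key : forall g, g = 3 \/ g = 4 -> shG n G r' (m' %% n) ((2 * g) %% 4) g = 2 ->
      (forall rr j, rr < 4 -> 0 < j < g -> shG n G r' (m' %% n) rr j <> 2) ->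
      r = (2 * m) %% 4.
    move=> g hg Hg Hb; move: Hg Hb; rewrite /shG => Hg Hb.
    have E : forall j, (m' %% n + j) %% n = (m' + j) %% n by move=> j; rewrite modnDml.
    rewrite E in Hg.
    have [lt|[gt|eq]] : m < m' + g \/ m' + g < m \/ m = m' + g by lia.
    - have [rr [hrr err]] := tr_surj (ltn_ord r') hr.
      exfalso; apply: (Hb rr (m - m')) => //; first by lia.
      by rewrite E err subnKC ?Hr // ltnW.
    - have : P (m' + g).
        rewrite /P gt /=; apply/existsP.
        exists (Ordinal (ltn_pmod (r' + (2 * g) %% 4) (isT : 0 < 4))).
        by rewrite /= Hg.
      move/maxm; lia.
    - subst m.
      have := colu n7 HG (a := (r' + (2 * g) %% 4) %% 4) (b := (m' + g) %% n) (r := r).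
      move=> /(_ (ltn_pmod _ (isT : 0 < 4)) (ltn_pmod _ n0) hr Hg Hr) ->.
      rewrite e'; lia.
  have [[HA HAb]|[HB HBb]] := step n7 HG'' H00''.
  - exact (key 3 (or_introl erefl) HA HAb).
  - exact (key 4 (or_intror erefl) HB HBb).
have := Q n 0 isT; rewrite modnn H00 => /(_ erefl); lia.
Qed.

Lemma tri m i j l : i < m -> j < m -> l < m -> cd m i l <= cd m i j + cd m j l.
Proof. rewrite /cd /ad. lia. Qed.

Section Vtx.
Variable m : nat.
Local Notation N := m.+1.
Local Notation V := ('I_4 * 'I_N)%type.
Local Notation e := (C4xCn_adj N).

Definition pos (u : V) : nat * nat := (nat_of_ord u.1, nat_of_ord u.2).
Definition dV (u v : V) := dst N (pos u) (pos v).
Definition shv (u : V) i j : V := (inord ((u.1 + i) %% 4), inord ((u.2 + j) %% N)).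

Lemma shv1 u i j : nat_of_ord (shv u i j).1 = (u.1 + i) %% 4.
Proof. by rewrite /= inordK // ltn_pmod. Qed.
Lemma shv2 u i j : nat_of_ord (shv u i j).2 = (u.2 + j) %% N.
Proof. by rewrite /= inordK // ltn_pmod. Qed.

Lemma pos_inj u v : pos u = pos v -> u = v.
Proof. by case: u v => [u1 u2] [v1 v2] [/val_inj -> /val_inj ->]. Qed.

Lemma vld_pos u : vld N (pos u).
Proof. by rewrite /vld /= !ltn_ord. Qed.

Lemma shv0 u : shv u 0 0 = u.
Proof. by apply: pos_inj; rewrite /pos shv1 shv2 !addn0 !modn_small. Qed.

Lemma shv_r u i j : shv u (i + 4) j = shv u i j.
Proof. by apply: pos_inj; rewrite /pos !shv1 !shv2 addnA modnDr. Qed.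
Lemma shv_c u i j : shv u i (j + N) = shv u i j.
Proof. by apply: pos_inj; rewrite /pos !shv1 !shv2 addnA modnDr. Qed.

Lemma e_sym x y : e x y -> e y x.
Proof.
rewrite /C4xCn_adj /cart_adj /cycle_adj.
move=> /orP [/andP [h1 h2]|/andP [h1 h2]]; apply/orP; [left|right]; apply/andP;
  (split; [by rewrite eq_sym | by rewrite orbC]).
Qed.

Lemma modS x d : (x %% d).+1 %% d = x.+1 %% d.
Proof. by rewrite -addn1 modnDml addn1. Qed.

Lemma e_col u i j : e (shv u i j) (shv u i j.+1).
Proof.
apply/orP; left; rewrite /= eqxx /= /cycle_adj.
by rewrite !inordK ?ltn_pmod // modS addnS eqxx.
Qed.

Lemma e_row u i j : e (shv u i j) (shv u i.+1 j).
Proof.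
apply/orP; right; rewrite /= eqxx /= /cycle_adj.
by rewrite !inordK ?ltn_pmod // modS addnS eqxx.
Qed.


Lemma dV_sym u v : dV u v = dV v u.
Proof. rewrite /dV /dst /cd /ad /=; lia. Qed.

Lemma dV_tri u v w : dV u w <= dV u v + dV v w.
Proof.
rewrite /dV /dst /=.
have := ltn_ord u.1; have := ltn_ord v.1; have := ltn_ord w.1.
have := ltn_ord u.2; have := ltn_ord v.2; have := ltn_ord w.2.
move=> *; have := tri (m:=4) (i:=u.1) (j:=v.1) (l:=w.1); have := tri (m:=N) (i:=u.2) (j:=v.2) (l:=w.2).
lia.
Qed.

Lemma cyc_cd n i j : 0 < n -> i < n -> j < n -> (j == i.+1 %% n) || (i == j.+1 %% n) -> cd n i j <= 1.
Proof.
move=> n0 hi hj; have := @modtwo i.+1 n; have := @modtwo j.+1 n.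
move=> /(_ ltac:(lia)) h1 /(_ ltac:(lia)) h2; rewrite h1 h2.
case: ifP; case: ifP; rewrite /cd /ad => *; lia.
Qed.

Lemma edge_d u v : e u v -> dV u v <= 1.
Proof.
rewrite /C4xCn_adj /cart_adj /dV /dst /= => /orP [/andP [/eqP h1 h2]|/andP [/eqP h1 h2]].
- have := cyc_cd (ltn0Sn m) (ltn_ord u.2) (ltn_ord v.2) h2; rewrite h1 /cd /ad; lia.
- have := cyc_cd (isT : 0 < 4) (ltn_ord u.1) (ltn_ord v.1) h2; rewrite h1 /cd /ad; lia.
Qed.

Lemma within_d k u v : within e k u v -> dV u v <= k.
Proof.
case=> p [hp hl hs]; suff : dV u (last u p) <= size p by rewrite hl => h; lia.
elim: p u hp {hl hs} => [|x p IH] u /=; first by rewrite /dV /dst /cd /ad; lia.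
case/andP => h1 h2; have h3 := IH x h2; have h4 := edge_d h1.
have := leq_add h4 h3; rewrite add1n => h5; exact: leq_trans (dV_tri u x (last x p)) h5.
Qed.

Lemma core u v : exists i j, [/\ i < 4, j < N, v = shv u i j & cd 4 0 i + cd N 0 j = dV u v].
Proof.
have [i [hi ei]] := tr_surj (ltn_ord u.1) (ltn_ord v.1).
have [j [hj ej]] := tr_surj (ltn_ord u.2) (ltn_ord v.2).
exists i, j; split => //.
  by apply: pos_inj; rewrite /pos shv1 shv2 ei ej.
have h1 := iso (m:=4) (ltn_ord u.1) (isT : 0 < 4) hi.
have h2 := iso (m:=N) (ltn_ord u.2) (ltn0Sn m) hj.
rewrite addn0 (modn_small (ltn_ord u.1)) ei in h1.
rewrite addn0 (modn_small (ltn_ord u.2)) ej in h2.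
by rewrite -h1 -h2.
Qed.

Lemma within1 k u a : e u a -> 1 <= k -> within e k u a.
Proof. by move=> h hk; exists [:: a]; rewrite /= h. Qed.
Lemma within2 k u a b : e u a -> e a b -> 2 <= k -> within e k u b.
Proof. by move=> h h' hk; exists [:: a; b]; rewrite /= h h'. Qed.

Lemma e_r3 u i j : e (shv u i j) (shv u (i + 3) j).
Proof. apply: e_sym; have := e_row u (i + 3) j; by rewrite -addnS shv_r. Qed.
Lemma e_cm u i j : e (shv u i j) (shv u i (j + m)).
Proof.
apply: e_sym; have := e_col u i (j + m).
by rewrite -addnS shv_c.
Qed.

Lemma offcases i j : 3 <= m -> i < 4 -> j < N -> cd 4 0 i + cd N 0 j <= 2 ->
  (i = 0 /\ (j = 0 \/ j = 1 \/ j = m \/ j = 2 \/ j = m.-1)) \/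
  (i = 1 /\ (j = 0 \/ j = 1 \/ j = m)) \/ (i = 3 /\ (j = 0 \/ j = 1 \/ j = m)) \/
  (i = 2 /\ j = 0).
Proof.
move=> m3 hi hj; have : i = 0 \/ i = 1 \/ i = 2 \/ i = 3 by lia.
case=> [->|[->|[->|->]]]; rewrite /cd /ad /= => hd.
- left; split => //; lia.
- right; left; split => //; lia.
- right; right; right; split => //; lia.
- right; right; left; split => //; lia.
Qed.

Lemma off_within u i j k : 3 <= m -> i < 4 -> j < N -> k <= 2 ->
  cd 4 0 i + cd N 0 j <= k -> within e k u (shv u i j).
Proof.
move=> m3 hi hj hk hd.
have eu : u = shv u 0 0 by rewrite shv0.
have hd' : cd 4 0 i + cd N 0 j <= 2 by lia.
have kk : 1 <= k -> within e k u (shv u i j) -> within e k u (shv u i j) by [].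
case: (offcases m3 hi hj hd') => [[? H]|[[? H]|[[? H]|[? ?]]]]; subst i; try subst j.
- case: H => [?|[?|[?|[?|?]]]]; subst j.
  + by rewrite shv0; exists [::].
  + apply: within1; last by move: hd; rewrite /cd /ad; lia.
    by rewrite {1}eu; apply: e_col.
  + apply: within1; last by move: hd; rewrite /cd /ad; lia.
    by rewrite {1}eu; apply: (e_cm u 0 0).
  + apply: (within2 (a := shv u 0 1)); last by move: hd; rewrite /cd /ad; lia.
    * by rewrite {1}eu; apply: e_col.
    * exact: e_col.
  + apply: (within2 (a := shv u 0 m)); last by move: hd; rewrite /cd /ad; lia.
    * by rewrite {1}eu; apply: (e_cm u 0 0).
    * apply: e_sym; have := e_col u 0 m.-1; rewrite prednK //; lia.
- case: H => [?|[?|?]]; subst j.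
  + apply: within1; last by move: hd; rewrite /cd /ad; lia.
    by rewrite {1}eu; apply: e_row.
  + apply: (within2 (a := shv u 1 0)); last by move: hd; rewrite /cd /ad; lia.
    * by rewrite {1}eu; apply: e_row.
    * exact: e_col.
  + apply: (within2 (a := shv u 1 0)); last by move: hd; rewrite /cd /ad; lia.
    * by rewrite {1}eu; apply: e_row.
    * exact: (e_cm u 1 0).
- case: H => [?|[?|?]]; subst j.
  + apply: within1; last by move: hd; rewrite /cd /ad; lia.
    by rewrite {1}eu; apply: (e_r3 u 0 0).
  + apply: (within2 (a := shv u 3 0)); last by move: hd; rewrite /cd /ad; lia.
    * by rewrite {1}eu; apply: (e_r3 u 0 0).
    * exact: e_col.
  + apply: (within2 (a := shv u 3 0)); last by move: hd; rewrite /cd /ad; lia.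
    * by rewrite {1}eu; apply: (e_r3 u 0 0).
    * exact: (e_cm u 3 0).
- apply: (within2 (a := shv u 1 0)); last by move: hd; rewrite /cd /ad; lia.
  + by rewrite {1}eu; apply: e_row.
  + exact: e_row.
Qed.

Lemma d_within k u v : 3 <= m -> k <= 2 -> dV u v <= k -> within e k u v.
Proof.
move=> m3 hk hd; have [i [j [hi hj ev hc]]] := core u v.
subst v; apply: (off_within u m3 hi hj hk); by rewrite hc.
Qed.

Definition offs1 := [:: (0,0); (1,0); (3,0); (0,1); (0,m)].
Definition offs2 := offs1 ++ [:: (2,0); (0,2); (0,m.-1); (1,1); (1,m); (3,1); (3,m)].

Lemma ball2 u : 3 <= m -> #|[set v | dV u v <= 2]| <= 12.
Proof.
move=> m3.
apply: leq_trans (subset_leq_card (_ : _ \subset [seq shv u ij.1 ij.2 | ij <- offs2])) _.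
  apply/subsetP => v; rewrite inE => hv.
  have [i [j [hi hj ev hc]]] := core u v.
  rewrite ev; apply/mapP; exists (i, j) => //.
  have hd : cd 4 0 i + cd N 0 j <= 2 by rewrite hc.
  case: (offcases m3 hi hj hd) => [[-> H]|[[-> H]|[[-> H]|[-> ->]]]].
  - by case: H => [->|[->|[->|[->|->]]]]; rewrite /offs2 /offs1 !inE eqxx ?orbT.
  - by case: H => [->|[->|->]]; rewrite /offs2 /offs1 !inE eqxx ?orbT.
  - by case: H => [->|[->|->]]; rewrite /offs2 /offs1 !inE eqxx ?orbT.
  - by rewrite /offs2 /offs1 !inE eqxx ?orbT.
by apply: leq_trans (card_size _) _; rewrite size_map.
Qed.

Lemma ball1 u : 3 <= m -> #|[set v | dV u v <= 1]| <= 5.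
Proof.
move=> m3.
apply: leq_trans (subset_leq_card (_ : _ \subset [seq shv u ij.1 ij.2 | ij <- offs1])) _.
  apply/subsetP => v; rewrite inE => hv.
  have [i [j [hi hj ev hc]]] := core u v.
  rewrite ev; apply/mapP; exists (i, j) => //.
  have hd : cd 4 0 i + cd N 0 j <= 2 by rewrite hc; lia.
  have hd1 : cd 4 0 i + cd N 0 j <= 1 by rewrite hc.
  case: (offcases m3 hi hj hd) => [[? H]|[[? H]|[[? H]|[? ?]]]]; subst i; try subst j.
  - case: H => [?|[?|[?|[?|?]]]]; subst j; rewrite /offs1 !inE ?eqxx ?orbT //;
      exfalso; move: hd1; rewrite /cd /ad; lia.
  - case: H => [?|[?|?]]; subst j; rewrite /offs1 !inE ?eqxx ?orbT //;
      exfalso; move: hd1; rewrite /cd /ad; lia.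
  - case: H => [?|[?|?]]; subst j; rewrite /offs1 !inE ?eqxx ?orbT //;
      exfalso; move: hd1; rewrite /cd /ad; lia.
  - exfalso; move: hd1; rewrite /cd /ad; lia.
by apply: leq_trans (card_size _) _; rewrite size_map.
Qed.

End Vtx.

Lemma card_two (T : finType) (A : {set T}) x y : x \in A -> y \in A -> x != y -> 1 < #|A|.
Proof.
move=> hx hy hne.
have : [set x; y] \subset A by apply/subsetP => z; rewrite !inE => /orP [/eqP->|/eqP->].
by move/subset_leq_card; rewrite cards2 hne.
Qed.

Lemma card_le1_eq (T : finType) (A : {set T}) x y : #|A| <= 1 -> x \in A -> y \in A -> x = y.
Proof.
move=> h hx hy; apply/eqP; apply: contraLR h => hne; rewrite -ltnNge.
exact: card_two hx hy hne.
Qed.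

Lemma card_sum (T : finType) (P : pred T) : #|[set v | P v]| = \sum_v (P v : nat).
Proof.
rewrite -sum1_card big_mkcond /=; apply: eq_bigr => v _; rewrite inE; by case: (P v).
Qed.

Section Count.
Variable m : nat.
Hypothesis m3 : 3 <= m.
Local Notation N := m.+1.
Local Notation V := ('I_4 * 'I_N)%type.
Local Notation e := (C4xCn_adj N).

Definition covb (f : broadcast2 V) v u := (0 < f v) && (dV u v <= f v).
Definition covs f u := [set v | covb f v u].
Definition onesS (f : broadcast2 V) := [set v | (f v : nat) == 1].
Definition twosS (f : broadcast2 V) := [set v | (f v : nat) == 2].
Definition Dset f := [set u | 1 < #|covs f u|].

Lemma count_ub f : \sum_u #|covs f u| + #|onesS f| <= 6 * cost f.
Proof.
rewrite (eq_bigr (fun u => \sum_v (covb f v u : nat))); last by move=> u _; rewrite card_sum.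
rewrite exchange_big /= /onesS card_sum /cost big_distrr -big_split /=.
apply: leq_sum => v _.
have hb : (\sum_u (covb f v u : nat)) <= #|[set u | dV v u <= f v]|.
  rewrite -card_sum; apply: subset_leq_card; apply/subsetP => u; rewrite !inE /covb.
  by case/andP => _; rewrite dV_sym.
have : (f v : nat) = 0 \/ (f v : nat) = 1 \/ (f v : nat) = 2 by have := ltn_ord (f v); lia.
case=> [h0|[h1|h2]].
- rewrite (eq_bigr (fun _ => 0)) ?big1 // ?h0 // => u _; by rewrite /covb h0.
- have := ball1 v m3; move: hb; rewrite h1 /=; lia.
- have := ball2 v m3; move: hb; rewrite h2 /=; lia.
Qed.

Lemma count_lb f : dominating e f -> 4 * N + #|Dset f| <= \sum_u #|covs f u|.
Proof.
move=> dom.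
have -> : 4 * N = \sum_(u : V) 1 by rewrite sum1_card card_prod !card_ord.
rewrite /Dset card_sum -big_split /=; apply: leq_sum => u _.
have [v [hv hw]] := dom u.
have : v \in covs f u by rewrite inE /covb hv (within_d hw).
move=> hin; have hp : 0 < #|covs f u| by apply/card_gt0P; exists v.
by case: (ltnP 1 #|covs f u|) => h /=; [exact: h | rewrite addn0].
Qed.

Lemma parity f : cost f = 2 * #|twosS f| + #|onesS f|.
Proof.
rewrite /cost /twosS /onesS !card_sum big_distrr -big_split /=.
apply: eq_bigr => v _.
have : (f v : nat) = 0 \/ (f v : nat) = 1 \/ (f v : nat) = 2 by have := ltn_ord (f v); lia.
by case=> [->|[->|->]].
Qed.

End Count.

Section Struct.
Variable m : nat.
Hypothesis m3 : 3 <= m.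
Local Notation N := m.+1.
Local Notation V := ('I_4 * 'I_N)%type.
Local Notation e := (C4xCn_adj N).

Definition vx (p : nat * nat) : V := (inord p.1, inord p.2).

Lemma pos_vx p : vld N p -> pos (vx p) = p.
Proof. case: p => a b; rewrite /vld /= => /andP [ha hb]; by rewrite /pos /= !inordK. Qed.

Lemma vx_pos v : vx (pos v) = v.
Proof. by case: v => a b; rewrite /vx /pos /= !inord_val. Qed.

Definition GG (f : broadcast2 V) i j := if (i < 4) && (j < N) then nat_of_ord (f (vx (i, j))) else 0.

Lemma GG_vld f p : vld N p -> GG f p.1 p.2 = f (vx p).
Proof. by case: p => a b; rewrite /GG /vld /= => ->. Qed.

Lemma GG_pos f v : GG f (pos v).1 (pos v).2 = f v.
Proof. by rewrite GG_vld ?vx_pos // vld_pos. Qed.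

Lemma cov_GG f v u : vld N v -> vld N u -> cov N (GG f) v u = covb f (vx v) (vx u).
Proof.
move=> hv hu; rewrite /cov /covb GG_vld // /dV !pos_vx //.
Qed.

Lemma struct f : dominating e f -> #|onesS f| <= 1 -> #|Dset f| <= 1 ->
  0 < #|twosS f| -> 7 <= N -> N %% 2 = 1 -> False.
Proof.
move=> dom ho hd ht n7 nodd.
have HG : Hyp N (GG f).
  split.
  - move=> i j; rewrite /GG; case: ifP => // _; rewrite -ltnS; exact: ltn_ord.
  - move=> u hu; have [v [hv hw]] := dom (vx u).
    exists (pos v); split; first exact: vld_pos.
    by rewrite cov_GG ?vld_pos // vx_pos /covb hv (within_d hw).
  - move=> v w hv hw e1 e2; rewrite -(pos_vx hv) -(pos_vx hw); congr pos.
    apply: (card_le1_eq ho); rewrite inE -GG_vld //; exact/eqP.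
  - move=> u u' v1 v2 w1 w2 hu hu' hv1 hv2 hw1 hw2 ne1 c1 c2 ne2 c3 c4.
    rewrite -(pos_vx hu) -(pos_vx hu'); congr pos.
    apply: (card_le1_eq hd); rewrite inE.
    + apply: (card_two (x := vx v1) (y := vx v2)); rewrite ?inE -?cov_GG //.
      apply/eqP => h; apply: ne1; by rewrite -(pos_vx hv1) -(pos_vx hv2) h.
    + apply: (card_two (x := vx w1) (y := vx w2)); rewrite ?inE -?cov_GG //.
      apply/eqP => h; apply: ne2; by rewrite -(pos_vx hw1) -(pos_vx hw2) h.
have [v] := card_gt0P ht; rewrite inE => /eqP hv.
have HG' := shift_hyp (ltn0Sn m) (ltn_ord v.1) (ltn_ord v.2) HG.
apply: (chain n7 nodd HG').
rewrite /shG !addn0 !modn_small ?ltn_ord //.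
by have := GG_pos f v; rewrite /pos /= hv.
Qed.

Lemma lower f : dominating e f -> gamma_formula N <= cost f.
Proof.
move=> dom.
have ub := count_ub m3 f; have lb := count_lb dom; have par := parity m3 f.
have key := leq_trans (leq_add lb (leqnn #|onesS f|)) ub.
clear ub lb.
rewrite /gamma_formula.
move: key par; set c := cost f; set o := #|onesS f|; set d := #|Dset f|; set t := #|twosS f| => key par.
case Hs: (N %% 6) => [|[|[|[|[|s]]]]].
- lia.
- case: (leqP (4 * (N %/ 6) + 2) (cost f)) => // hlt; exfalso.
  apply: (struct dom); lia.
- lia.
- case: (leqP (4 * (N %/ 6) + 3) (cost f)) => // hlt; exfalso.
  apply: (struct dom); lia.
- lia.
- lia.
Qed.

End Struct.

Definition blocks k : seq (nat * nat * nat) :=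
  [seq (0, 6 * i, 2) | i <- iota 0 k] ++ [seq (2, 6 * i + 3, 2) | i <- iota 0 k].
Definition tailL k s : seq (nat * nat * nat) :=
  match s with
  | 0 => [::] | 1 => [:: (0, 6 * k, 2)] | 2 => [:: (0, 6 * k - 1, 1); (2, 6 * k, 1)]
  | 3 => [:: (0, 6 * k, 2); (2, 6 * k + 2, 1)] | 4 => [:: (0, 6 * k, 2); (2, 6 * k + 2, 1)]
  | _ => [:: (0, 6 * k, 2); (2, 6 * k + 2, 2)] end.
Definition LL k s := blocks k ++ tailL k s.

Lemma mem_b0 k s i : i < k -> (0, 6 * i, 2) \in LL k s.
Proof.
move=> hi; rewrite mem_cat; apply/orP; left; rewrite mem_cat; apply/orP; left.
by apply/mapP; exists i => //; rewrite mem_iota; lia.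
Qed.
Lemma mem_b3 k s i : i < k -> (2, 6 * i + 3, 2) \in LL k s.
Proof.
move=> hi; rewrite mem_cat; apply/orP; left; rewrite mem_cat; apply/orP; right.
by apply/mapP; exists i => //; rewrite mem_iota; lia.
Qed.
Lemma mem_tail k s x : x \in tailL k s -> x \in LL k s.
Proof. by move=> h; rewrite mem_cat h orbT. Qed.
Lemma mem_zero k s : s < 6 -> 4 <= 6 * k + s -> (0, 0, 2) \in LL k s.
Proof.
move=> hs h4; case: (posnP k) => hk.
  subst k; apply: mem_tail.
  have : s = 4 \/ s = 5 by lia.
  by case=> ->; rewrite /tailL /= !inE eqxx.
by have := @mem_b0 k s 0 hk; rewrite muln0.
Qed.
Lemma mem_last k s : 0 < k -> (2, 6 * k - 3, 2) \in LL k s.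
Proof.
move=> hk; have := @mem_b3 k s (k - 1) ltac:(lia).
by have -> : 6 * (k - 1) + 3 = 6 * k - 3 by lia.
Qed.

Lemma LL_vld k s x : s < 6 -> 4 <= 6 * k + s -> x \in LL k s ->
  [/\ x.1.1 < 4, x.1.2 < 6 * k + s, 0 < x.2 & x.2 <= 2].
Proof.
move=> hs h4; rewrite !mem_cat => /orP [/orP [] /mapP [i] |].
- by rewrite mem_iota => hi ->; split => //=; lia.
- by rewrite mem_iota => hi ->; split => //=; lia.
have : s = 0 \/ s = 1 \/ s = 2 \/ s = 3 \/ s = 4 \/ s = 5 by lia.
case=> [?|[?|[?|[?|[?|?]]]]]; subst s; rewrite /tailL /= ?inE //;
  repeat (case/orP; [move/eqP -> ; split => /=; lia|]); move/eqP -> ; split => /=; lia.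
Qed.

Lemma sum_const_iota a k c : \sum_(i <- iota a k) c = k * c.
Proof. elim: k a => [|k IH] a; first by rewrite big_nil. by rewrite /= big_cons IH mulSn. Qed.

Definition tcost s := match s with 0 => 0 | 1 => 2 | 2 => 2 | 3 => 3 | 4 => 3 | _ => 4 end.

Lemma sum_LL k s : s < 6 -> \sum_(x <- LL k s) x.2 = 4 * k + tcost s.
Proof.
move=> hs; rewrite !big_cat !big_map /= !sum_const_iota.
have : s = 0 \/ s = 1 \/ s = 2 \/ s = 3 \/ s = 4 \/ s = 5 by lia.
case=> [?|[?|[?|[?|[?|?]]]]]; subst s; rewrite /tailL /= ?big_cons ?big_nil /=; lia.
Qed.

Lemma dom_ar k s r c : s < 6 -> 4 <= 6 * k + s -> r < 4 -> c < 6 * k + s ->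
  exists x, x \in LL k s /\ cd 4 r x.1.1 + cd (6 * k + s) c x.1.2 <= x.2.
Proof.
move=> hs h4 hr hc.
have Hr : r = 0 \/ r = 1 \/ r = 2 \/ r = 3 by lia.
case: (ltnP c (6 * k - 2)) => hc2.
- have Ht : c %% 6 = 0 \/ c %% 6 = 1 \/ c %% 6 = 2 \/ c %% 6 = 3 \/ c %% 6 = 4 \/ c %% 6 = 5 by lia.
  case: Ht => [Ht|[Ht|[Ht|[Ht|[Ht|Ht]]]]]; case: Hr => [?|[?|[?|?]]]; subst r.
  + exists (0, 6 * (c %/ 6), 2); split; [apply: mem_b0; lia | rewrite /cd /ad /=; lia].
  + exists (0, 6 * (c %/ 6), 2); split; [apply: mem_b0; lia | rewrite /cd /ad /=; lia].
  + exists (0, 6 * (c %/ 6), 2); split; [apply: mem_b0; lia | rewrite /cd /ad /=; lia].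
  + exists (0, 6 * (c %/ 6), 2); split; [apply: mem_b0; lia | rewrite /cd /ad /=; lia].
  + exists (0, 6 * (c %/ 6), 2); split; [apply: mem_b0; lia | rewrite /cd /ad /=; lia].
  + exists (0, 6 * (c %/ 6), 2); split; [apply: mem_b0; lia | rewrite /cd /ad /=; lia].
  + exists (2, 6 * (c %/ 6) + 3, 2); split; [apply: mem_b3; lia | rewrite /cd /ad /=; lia].
  + exists (0, 6 * (c %/ 6), 2); split; [apply: mem_b0; lia | rewrite /cd /ad /=; lia].
  + exists (0, 6 * (c %/ 6), 2); split; [apply: mem_b0; lia | rewrite /cd /ad /=; lia].
  + exists (2, 6 * (c %/ 6) + 3, 2); split; [apply: mem_b3; lia | rewrite /cd /ad /=; lia].
  + exists (2, 6 * (c %/ 6) + 3, 2); split; [apply: mem_b3; lia | rewrite /cd /ad /=; lia].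
  + exists (2, 6 * (c %/ 6) + 3, 2); split; [apply: mem_b3; lia | rewrite /cd /ad /=; lia].
  + exists (2, 6 * (c %/ 6) + 3, 2); split; [apply: mem_b3; lia | rewrite /cd /ad /=; lia].
  + exists (2, 6 * (c %/ 6) + 3, 2); split; [apply: mem_b3; lia | rewrite /cd /ad /=; lia].
  + exists (2, 6 * (c %/ 6) + 3, 2); split; [apply: mem_b3; lia | rewrite /cd /ad /=; lia].
  + exists (2, 6 * (c %/ 6) + 3, 2); split; [apply: mem_b3; lia | rewrite /cd /ad /=; lia].
  + exists (0, 6 * (c %/ 6 + 1), 2); split; [apply: mem_b0; lia | rewrite /cd /ad /=; lia].
  + exists (2, 6 * (c %/ 6) + 3, 2); split; [apply: mem_b3; lia | rewrite /cd /ad /=; lia].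
  + exists (2, 6 * (c %/ 6) + 3, 2); split; [apply: mem_b3; lia | rewrite /cd /ad /=; lia].
  + exists (2, 6 * (c %/ 6) + 3, 2); split; [apply: mem_b3; lia | rewrite /cd /ad /=; lia].
  + exists (0, 6 * (c %/ 6 + 1), 2); split; [apply: mem_b0; lia | rewrite /cd /ad /=; lia].
  + exists (0, 6 * (c %/ 6 + 1), 2); split; [apply: mem_b0; lia | rewrite /cd /ad /=; lia].
  + exists (2, 6 * (c %/ 6) + 3, 2); split; [apply: mem_b3; lia | rewrite /cd /ad /=; lia].
  + exists (0, 6 * (c %/ 6 + 1), 2); split; [apply: mem_b0; lia | rewrite /cd /ad /=; lia].
- have Hs' : s = 0 \/ s = 1 \/ s = 2 \/ s = 3 \/ s = 4 \/ s = 5 by lia.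
  case: Hs' => [?|[?|[?|[?|[?|?]]]]]; subst s.
  + have He : 6 * k + 0 - c = 1 \/ 6 * k + 0 - c = 2 by lia.
    case: He => [He|He]; case: Hr => [?|[?|[?|?]]]; subst r.
    * exists (0, 0, 2); split; [apply: mem_zero; lia | rewrite /cd /ad /=; lia].
    * exists (0, 0, 2); split; [apply: mem_zero; lia | rewrite /cd /ad /=; lia].
    * exists (2, 6 * k - 3, 2); split; [apply: mem_last; lia | rewrite /cd /ad /=; lia].
    * exists (0, 0, 2); split; [apply: mem_zero; lia | rewrite /cd /ad /=; lia].
    * exists (0, 0, 2); split; [apply: mem_zero; lia | rewrite /cd /ad /=; lia].
    * exists (2, 6 * k - 3, 2); split; [apply: mem_last; lia | rewrite /cd /ad /=; lia].
    * exists (2, 6 * k - 3, 2); split; [apply: mem_last; lia | rewrite /cd /ad /=; lia].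
    * exists (2, 6 * k - 3, 2); split; [apply: mem_last; lia | rewrite /cd /ad /=; lia].
  + have He : 6 * k + 1 - c = 1 \/ 6 * k + 1 - c = 2 \/ 6 * k + 1 - c = 3 by lia.
    case: He => [He|[He|He]]; case: Hr => [?|[?|[?|?]]]; subst r.
    * exists (0, 6 * k, 2); split; [apply: mem_tail; by rewrite /tailL /= !inE eqxx ?orbT | rewrite /cd /ad /=; lia].
    * exists (0, 6 * k, 2); split; [apply: mem_tail; by rewrite /tailL /= !inE eqxx ?orbT | rewrite /cd /ad /=; lia].
    * exists (0, 6 * k, 2); split; [apply: mem_tail; by rewrite /tailL /= !inE eqxx ?orbT | rewrite /cd /ad /=; lia].
    * exists (0, 6 * k, 2); split; [apply: mem_tail; by rewrite /tailL /= !inE eqxx ?orbT | rewrite /cd /ad /=; lia].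
    * exists (0, 6 * k, 2); split; [apply: mem_tail; by rewrite /tailL /= !inE eqxx ?orbT | rewrite /cd /ad /=; lia].
    * exists (0, 6 * k, 2); split; [apply: mem_tail; by rewrite /tailL /= !inE eqxx ?orbT | rewrite /cd /ad /=; lia].
    * exists (2, 6 * k - 3, 2); split; [apply: mem_last; lia | rewrite /cd /ad /=; lia].
    * exists (0, 6 * k, 2); split; [apply: mem_tail; by rewrite /tailL /= !inE eqxx ?orbT | rewrite /cd /ad /=; lia].
    * exists (0, 6 * k, 2); split; [apply: mem_tail; by rewrite /tailL /= !inE eqxx ?orbT | rewrite /cd /ad /=; lia].
    * exists (2, 6 * k - 3, 2); split; [apply: mem_last; lia | rewrite /cd /ad /=; lia].
    * exists (2, 6 * k - 3, 2); split; [apply: mem_last; lia | rewrite /cd /ad /=; lia].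
    * exists (2, 6 * k - 3, 2); split; [apply: mem_last; lia | rewrite /cd /ad /=; lia].
  + have He : 6 * k + 2 - c = 1 \/ 6 * k + 2 - c = 2 \/ 6 * k + 2 - c = 3 \/ 6 * k + 2 - c = 4 by lia.
    case: He => [He|[He|[He|He]]]; case: Hr => [?|[?|[?|?]]]; subst r.
    * exists (0, 0, 2); split; [apply: mem_zero; lia | rewrite /cd /ad /=; lia].
    * exists (0, 0, 2); split; [apply: mem_zero; lia | rewrite /cd /ad /=; lia].
    * exists (2, 6 * k, 1); split; [apply: mem_tail; by rewrite /tailL /= !inE eqxx ?orbT | rewrite /cd /ad /=; lia].
    * exists (0, 0, 2); split; [apply: mem_zero; lia | rewrite /cd /ad /=; lia].
    * exists (0, 6 * k - 1, 1); split; [apply: mem_tail; by rewrite /tailL /= !inE eqxx ?orbT | rewrite /cd /ad /=; lia].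
    * exists (2, 6 * k, 1); split; [apply: mem_tail; by rewrite /tailL /= !inE eqxx ?orbT | rewrite /cd /ad /=; lia].
    * exists (2, 6 * k, 1); split; [apply: mem_tail; by rewrite /tailL /= !inE eqxx ?orbT | rewrite /cd /ad /=; lia].
    * exists (2, 6 * k, 1); split; [apply: mem_tail; by rewrite /tailL /= !inE eqxx ?orbT | rewrite /cd /ad /=; lia].
    * exists (0, 6 * k - 1, 1); split; [apply: mem_tail; by rewrite /tailL /= !inE eqxx ?orbT | rewrite /cd /ad /=; lia].
    * exists (0, 6 * k - 1, 1); split; [apply: mem_tail; by rewrite /tailL /= !inE eqxx ?orbT | rewrite /cd /ad /=; lia].
    * exists (2, 6 * k, 1); split; [apply: mem_tail; by rewrite /tailL /= !inE eqxx ?orbT | rewrite /cd /ad /=; lia].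
    * exists (0, 6 * k - 1, 1); split; [apply: mem_tail; by rewrite /tailL /= !inE eqxx ?orbT | rewrite /cd /ad /=; lia].
    * exists (0, 6 * k - 1, 1); split; [apply: mem_tail; by rewrite /tailL /= !inE eqxx ?orbT | rewrite /cd /ad /=; lia].
    * exists (2, 6 * k - 3, 2); split; [apply: mem_last; lia | rewrite /cd /ad /=; lia].
    * exists (2, 6 * k - 3, 2); split; [apply: mem_last; lia | rewrite /cd /ad /=; lia].
    * exists (2, 6 * k - 3, 2); split; [apply: mem_last; lia | rewrite /cd /ad /=; lia].
  + have He : 6 * k + 3 - c = 1 \/ 6 * k + 3 - c = 2 \/ 6 * k + 3 - c = 3 \/ 6 * k + 3 - c = 4 \/ 6 * k + 3 - c = 5 by lia.
    case: He => [He|[He|[He|[He|He]]]]; case: Hr => [?|[?|[?|?]]]; subst r.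
    * exists (0, 6 * k, 2); split; [apply: mem_tail; by rewrite /tailL /= !inE eqxx ?orbT | rewrite /cd /ad /=; lia].
    * exists (2, 6 * k + 2, 1); split; [apply: mem_tail; by rewrite /tailL /= !inE eqxx ?orbT | rewrite /cd /ad /=; lia].
    * exists (2, 6 * k + 2, 1); split; [apply: mem_tail; by rewrite /tailL /= !inE eqxx ?orbT | rewrite /cd /ad /=; lia].
    * exists (2, 6 * k + 2, 1); split; [apply: mem_tail; by rewrite /tailL /= !inE eqxx ?orbT | rewrite /cd /ad /=; lia].
    * exists (0, 6 * k, 2); split; [apply: mem_tail; by rewrite /tailL /= !inE eqxx ?orbT | rewrite /cd /ad /=; lia].
    * exists (0, 6 * k, 2); split; [apply: mem_tail; by rewrite /tailL /= !inE eqxx ?orbT | rewrite /cd /ad /=; lia].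
    * exists (2, 6 * k + 2, 1); split; [apply: mem_tail; by rewrite /tailL /= !inE eqxx ?orbT | rewrite /cd /ad /=; lia].
    * exists (0, 6 * k, 2); split; [apply: mem_tail; by rewrite /tailL /= !inE eqxx ?orbT | rewrite /cd /ad /=; lia].
    * exists (0, 6 * k, 2); split; [apply: mem_tail; by rewrite /tailL /= !inE eqxx ?orbT | rewrite /cd /ad /=; lia].
    * exists (0, 6 * k, 2); split; [apply: mem_tail; by rewrite /tailL /= !inE eqxx ?orbT | rewrite /cd /ad /=; lia].
    * exists (0, 6 * k, 2); split; [apply: mem_tail; by rewrite /tailL /= !inE eqxx ?orbT | rewrite /cd /ad /=; lia].
    * exists (0, 6 * k, 2); split; [apply: mem_tail; by rewrite /tailL /= !inE eqxx ?orbT | rewrite /cd /ad /=; lia].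
    * exists (0, 6 * k, 2); split; [apply: mem_tail; by rewrite /tailL /= !inE eqxx ?orbT | rewrite /cd /ad /=; lia].
    * exists (0, 6 * k, 2); split; [apply: mem_tail; by rewrite /tailL /= !inE eqxx ?orbT | rewrite /cd /ad /=; lia].
    * exists (2, 6 * k - 3, 2); split; [apply: mem_last; lia | rewrite /cd /ad /=; lia].
    * exists (0, 6 * k, 2); split; [apply: mem_tail; by rewrite /tailL /= !inE eqxx ?orbT | rewrite /cd /ad /=; lia].
    * exists (0, 6 * k, 2); split; [apply: mem_tail; by rewrite /tailL /= !inE eqxx ?orbT | rewrite /cd /ad /=; lia].
    * exists (2, 6 * k - 3, 2); split; [apply: mem_last; lia | rewrite /cd /ad /=; lia].
    * exists (2, 6 * k - 3, 2); split; [apply: mem_last; lia | rewrite /cd /ad /=; lia].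
    * exists (2, 6 * k - 3, 2); split; [apply: mem_last; lia | rewrite /cd /ad /=; lia].
  + have He : 6 * k + 4 - c = 1 \/ 6 * k + 4 - c = 2 \/ 6 * k + 4 - c = 3 \/ 6 * k + 4 - c = 4 \/ 6 * k + 4 - c = 5 \/ 6 * k + 4 - c = 6 by lia.
    case: He => [He|[He|[He|[He|[He|He]]]]]; case: Hr => [?|[?|[?|?]]]; subst r.
    * exists (0, 0, 2); split; [apply: mem_zero; lia | rewrite /cd /ad /=; lia].
    * exists (0, 0, 2); split; [apply: mem_zero; lia | rewrite /cd /ad /=; lia].
    * exists (2, 6 * k + 2, 1); split; [apply: mem_tail; by rewrite /tailL /= !inE eqxx ?orbT | rewrite /cd /ad /=; lia].
    * exists (0, 0, 2); split; [apply: mem_zero; lia | rewrite /cd /ad /=; lia].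
    * exists (0, 6 * k, 2); split; [apply: mem_tail; by rewrite /tailL /= !inE eqxx ?orbT | rewrite /cd /ad /=; lia].
    * exists (2, 6 * k + 2, 1); split; [apply: mem_tail; by rewrite /tailL /= !inE eqxx ?orbT | rewrite /cd /ad /=; lia].
    * exists (2, 6 * k + 2, 1); split; [apply: mem_tail; by rewrite /tailL /= !inE eqxx ?orbT | rewrite /cd /ad /=; lia].
    * exists (2, 6 * k + 2, 1); split; [apply: mem_tail; by rewrite /tailL /= !inE eqxx ?orbT | rewrite /cd /ad /=; lia].
    * exists (0, 6 * k, 2); split; [apply: mem_tail; by rewrite /tailL /= !inE eqxx ?orbT | rewrite /cd /ad /=; lia].
    * exists (0, 6 * k, 2); split; [apply: mem_tail; by rewrite /tailL /= !inE eqxx ?orbT | rewrite /cd /ad /=; lia].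
    * exists (2, 6 * k + 2, 1); split; [apply: mem_tail; by rewrite /tailL /= !inE eqxx ?orbT | rewrite /cd /ad /=; lia].
    * exists (0, 6 * k, 2); split; [apply: mem_tail; by rewrite /tailL /= !inE eqxx ?orbT | rewrite /cd /ad /=; lia].
    * exists (0, 6 * k, 2); split; [apply: mem_tail; by rewrite /tailL /= !inE eqxx ?orbT | rewrite /cd /ad /=; lia].
    * exists (0, 6 * k, 2); split; [apply: mem_tail; by rewrite /tailL /= !inE eqxx ?orbT | rewrite /cd /ad /=; lia].
    * exists (0, 6 * k, 2); split; [apply: mem_tail; by rewrite /tailL /= !inE eqxx ?orbT | rewrite /cd /ad /=; lia].
    * exists (0, 6 * k, 2); split; [apply: mem_tail; by rewrite /tailL /= !inE eqxx ?orbT | rewrite /cd /ad /=; lia].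
    * exists (0, 6 * k, 2); split; [apply: mem_tail; by rewrite /tailL /= !inE eqxx ?orbT | rewrite /cd /ad /=; lia].
    * exists (0, 6 * k, 2); split; [apply: mem_tail; by rewrite /tailL /= !inE eqxx ?orbT | rewrite /cd /ad /=; lia].
    * exists (2, 6 * k - 3, 2); split; [apply: mem_last; lia | rewrite /cd /ad /=; lia].
    * exists (0, 6 * k, 2); split; [apply: mem_tail; by rewrite /tailL /= !inE eqxx ?orbT | rewrite /cd /ad /=; lia].
    * exists (0, 6 * k, 2); split; [apply: mem_tail; by rewrite /tailL /= !inE eqxx ?orbT | rewrite /cd /ad /=; lia].
    * exists (2, 6 * k - 3, 2); split; [apply: mem_last; lia | rewrite /cd /ad /=; lia].
    * exists (2, 6 * k - 3, 2); split; [apply: mem_last; lia | rewrite /cd /ad /=; lia].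
    * exists (2, 6 * k - 3, 2); split; [apply: mem_last; lia | rewrite /cd /ad /=; lia].
  + have He : 6 * k + 5 - c = 1 \/ 6 * k + 5 - c = 2 \/ 6 * k + 5 - c = 3 \/ 6 * k + 5 - c = 4 \/ 6 * k + 5 - c = 5 \/ 6 * k + 5 - c = 6 \/ 6 * k + 5 - c = 7 by lia.
    case: He => [He|[He|[He|[He|[He|[He|He]]]]]]; case: Hr => [?|[?|[?|?]]]; subst r.
    * exists (0, 0, 2); split; [apply: mem_zero; lia | rewrite /cd /ad /=; lia].
    * exists (0, 0, 2); split; [apply: mem_zero; lia | rewrite /cd /ad /=; lia].
    * exists (2, 6 * k + 2, 2); split; [apply: mem_tail; by rewrite /tailL /= !inE eqxx ?orbT | rewrite /cd /ad /=; lia].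
    * exists (0, 0, 2); split; [apply: mem_zero; lia | rewrite /cd /ad /=; lia].
    * exists (0, 0, 2); split; [apply: mem_zero; lia | rewrite /cd /ad /=; lia].
    * exists (2, 6 * k + 2, 2); split; [apply: mem_tail; by rewrite /tailL /= !inE eqxx ?orbT | rewrite /cd /ad /=; lia].
    * exists (2, 6 * k + 2, 2); split; [apply: mem_tail; by rewrite /tailL /= !inE eqxx ?orbT | rewrite /cd /ad /=; lia].
    * exists (2, 6 * k + 2, 2); split; [apply: mem_tail; by rewrite /tailL /= !inE eqxx ?orbT | rewrite /cd /ad /=; lia].
    * exists (0, 6 * k, 2); split; [apply: mem_tail; by rewrite /tailL /= !inE eqxx ?orbT | rewrite /cd /ad /=; lia].
    * exists (2, 6 * k + 2, 2); split; [apply: mem_tail; by rewrite /tailL /= !inE eqxx ?orbT | rewrite /cd /ad /=; lia].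
    * exists (2, 6 * k + 2, 2); split; [apply: mem_tail; by rewrite /tailL /= !inE eqxx ?orbT | rewrite /cd /ad /=; lia].
    * exists (2, 6 * k + 2, 2); split; [apply: mem_tail; by rewrite /tailL /= !inE eqxx ?orbT | rewrite /cd /ad /=; lia].
    * exists (0, 6 * k, 2); split; [apply: mem_tail; by rewrite /tailL /= !inE eqxx ?orbT | rewrite /cd /ad /=; lia].
    * exists (0, 6 * k, 2); split; [apply: mem_tail; by rewrite /tailL /= !inE eqxx ?orbT | rewrite /cd /ad /=; lia].
    * exists (2, 6 * k + 2, 2); split; [apply: mem_tail; by rewrite /tailL /= !inE eqxx ?orbT | rewrite /cd /ad /=; lia].
    * exists (0, 6 * k, 2); split; [apply: mem_tail; by rewrite /tailL /= !inE eqxx ?orbT | rewrite /cd /ad /=; lia].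
    * exists (0, 6 * k, 2); split; [apply: mem_tail; by rewrite /tailL /= !inE eqxx ?orbT | rewrite /cd /ad /=; lia].
    * exists (0, 6 * k, 2); split; [apply: mem_tail; by rewrite /tailL /= !inE eqxx ?orbT | rewrite /cd /ad /=; lia].
    * exists (0, 6 * k, 2); split; [apply: mem_tail; by rewrite /tailL /= !inE eqxx ?orbT | rewrite /cd /ad /=; lia].
    * exists (0, 6 * k, 2); split; [apply: mem_tail; by rewrite /tailL /= !inE eqxx ?orbT | rewrite /cd /ad /=; lia].
    * exists (0, 6 * k, 2); split; [apply: mem_tail; by rewrite /tailL /= !inE eqxx ?orbT | rewrite /cd /ad /=; lia].
    * exists (0, 6 * k, 2); split; [apply: mem_tail; by rewrite /tailL /= !inE eqxx ?orbT | rewrite /cd /ad /=; lia].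
    * exists (2, 6 * k - 3, 2); split; [apply: mem_last; lia | rewrite /cd /ad /=; lia].
    * exists (0, 6 * k, 2); split; [apply: mem_tail; by rewrite /tailL /= !inE eqxx ?orbT | rewrite /cd /ad /=; lia].
    * exists (0, 6 * k, 2); split; [apply: mem_tail; by rewrite /tailL /= !inE eqxx ?orbT | rewrite /cd /ad /=; lia].
    * exists (2, 6 * k - 3, 2); split; [apply: mem_last; lia | rewrite /cd /ad /=; lia].
    * exists (2, 6 * k - 3, 2); split; [apply: mem_last; lia | rewrite /cd /ad /=; lia].
    * exists (2, 6 * k - 3, 2); split; [apply: mem_last; lia | rewrite /cd /ad /=; lia].
Qed.

Lemma max_le_sum (L : seq (nat * nat * nat)) (P : pred (nat * nat * nat)) :
  \max_(x <- L | P x) x.2 <= \sum_(x <- L | P x) x.2.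
Proof.
elim: L => [|x L IH]; first by rewrite !big_nil.
rewrite !big_cons; case: ifP => _ //.
rewrite geq_max leq_addr /=; exact: leq_trans IH (leq_addl _ _).
Qed.

Section Up.
Variable m : nat.
Hypothesis m3 : 3 <= m.
Local Notation N := m.+1.
Local Notation V := ('I_4 * 'I_N)%type.
Local Notation e := (C4xCn_adj N).

Definition pw (L : seq (nat * nat * nat)) (p : nat * nat) :=
  \max_(x <- L | (x.1.1 == p.1) && (x.1.2 == p.2)) x.2.
Definition fb L : broadcast2 V := [ffun v => inord (pw L (pos v))].

Lemma upper : exists f, dominating e f /\ cost f <= gamma_formula N.
Proof.
pose k := N %/ 6; pose s := N %% 6.
have hs : s < 6 by rewrite /s; lia.
have hN : 6 * k + s = N by rewrite /k /s; lia.
have h4 : 4 <= 6 * k + s by rewrite hN; lia.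
pose L := LL k s.
have hv : forall x, x \in L -> [/\ x.1.1 < 4, x.1.2 < 6 * k + s, 0 < x.2 & x.2 <= 2].
  by move=> x hx; apply: LL_vld.
have p2 : forall p, pw L p <= 2.
  by move=> p; apply/bigmax_leqP_seq => x hx _; case: (hv x hx).
have fbv : forall v, nat_of_ord (fb L v) = pw L (pos v).
  by move=> v; rewrite ffunE inordK // ltnS p2.
exists (fb L); split.
- move=> u.
  have hu2 : (u.2 : nat) < 6 * k + s by rewrite hN.
  have [x [hx hd]] := dom_ar hs h4 (ltn_ord u.1) hu2.
  case: (hv x hx) => h1 h2 h3 h5.
  have vW : vld N (x.1.1, x.1.2) by rewrite /vld /= h1 -hN h2.
  pose W := @vx m (x.1.1, x.1.2).
  have pW : pos W = (x.1.1, x.1.2) by apply: pos_vx.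
  have ge : x.2 <= pw L (pos W).
    by rewrite pW; apply: (leq_bigmax_seq x hx); rewrite /= !eqxx.
  exists W; split.
    by rewrite fbv; exact: leq_trans h3 ge.
  apply: d_within => //; first by rewrite fbv p2.
  rewrite fbv /dV; apply: leq_trans _ ge; rewrite pW /dst /=; rewrite hN in hd; exact: hd.
- rewrite /cost (eq_bigr (fun v => pw L (pos v))); last by move=> v _; rewrite fbv.
  apply: (@leq_trans (\sum_(x <- L) x.2)); last first.
    by rewrite sum_LL // /gamma_formula -/k -/s /tcost.
  apply: (@leq_trans (\sum_v \sum_(x <- L) (if (x.1.1 == (pos v).1) && (x.1.2 == (pos v).2) then x.2 else 0))).
    apply: leq_sum => v _; rewrite -big_mkcond; exact: max_le_sum.
  rewrite exchange_big /= big_seq [X in _ <= X]big_seq; apply: leq_sum => x hx.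
  case: (hv x hx) => h1 h2 h3 h5.
  have vW : vld N (x.1.1, x.1.2) by rewrite /vld /= h1 -hN h2.
  pose W := @vx m (x.1.1, x.1.2).
  have pW : pos W = (x.1.1, x.1.2) by apply: pos_vx.
  rewrite (eq_bigr (fun v => if v == W then x.2 else 0)).
    by rewrite -big_mkcond big_pred1_eq.
  move=> v _; congr (if _ then _ else _).
  apply/idP/eqP => [/andP [/eqP a /eqP b]|->].
    apply: pos_inj; apply: (eq_trans _ (esym pW)).
    by rewrite [pos v]surjective_pairing; congr pair; [exact: (esym a) | exact: (esym b)].
  by apply/andP; split; apply/eqP; [exact: (esym (congr1 fst pW)) | exact: (esym (congr1 snd pW))].
Qed.

End Up.

Theorem theorem4p3 (n : nat) : 4 <= n ->
  is_gamma_b2 (C4xCn_adj n) (gamma_formula n).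
Proof.
case: n => [|m] // hn.
have m3 : 3 <= m by lia.
split.
- have [f [df cf]] := upper m3.
  exists f; split => //; apply/eqP; rewrite eqn_leq cf /=; exact: lower.
- by move=> f df; exact: lower.
Qed.
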